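(* Let $p$ be an admissible linear order on $\mathcal A$ and let $a,b\in L_e$ with $a<b$ such that no letter of $\mathcal A$ lies strictly between $a$ and $b$. For every word $w\in\mathcal A^n$, $$\rho\bigl(d_w(w_{a,b})\bigr)\le\rho(w_{a,b}).$$
   Context: Alphabet: $\mathcal A=L_e\sqcup L_o\sqcup G$ where $L_e=\{x_1,x_2,\dots\}$, $L_o=\{y_1,y_2,\dots\}$ are discrete and $G$ is identified with an interval of $\mathbb R$. An admissible order is a linear order $p$ on $\mathcal A$ for which $G$ is an interval and whose restriction to $G$ is the usual order of reals or its reverse. Generalised RSK (row insertion) w.r.t. $p$: to insert a letter $x$ into a tableau $T$: in the first row, if $x\in L_e$ find the leftmost entry strictly greater than $x$; if $x\in L_o\cup G$ find the leftmost entry greater than or equal to $x$; if there is none, append $x$ at the end of the row and stop; otherwise $x$ replaces that entry and the replaced entry is inserted into the second row by the same rule, and so on. For $w=z_1\cdots z_n$, $R(w)$ is obtained by inserting $z_1,\dots,z_n$ successively into the empty tableau. $w_{a,b}$ is the word obtained from $w$ by deleting all letters other than $a$ and $b$. The possible transformation $d_w(w_{a,b})$ is the word formed as follows: run the insertion of $z_1,\dots,z_n$ and write down the letters $a$ and $b$ in the order in which they are bumped out of the first row; then append the letters $a$, $b$ that remain in the first row of $R(w)$ at the end (in their order in that row). For a word $u$ in the letters $a,b$, its result $\rho(u)$ is the maximum, over all suffixes $u_k u_{k+1}\cdots u_N$ of $u=u_1\cdots u_N$ (including the empty suffix), of (number of $b$'s in the suffix) minus (number of $a$'s in the suffix). 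*)

(* Defs.v *)
From Stdlib Require Import Reals ZArith Arith List Bool.
Import ListNotations.
Set Implicit Arguments.

(* The alphabet A = L_e ⊔ L_o ⊔ G, with L_e = {x_1,x_2,...} ≅ nat,
   L_o = {y_1,y_2,...} ≅ nat, and G a type (later {r : R | I r}). *)
Inductive letter (Gt : Type) : Type :=
| Le : nat -> letter Gt
| Lo : nat -> letter Gt
| Gl : Gt -> letter Gt.
Arguments Le {Gt} _.
Arguments Lo {Gt} _.
Arguments Gl {Gt} _.

Definition is_Le {Gt} (x : letter Gt) : bool :=
  match x with Le _ => true | _ => false end.

Definition isLeN {Gt} (k : nat) (x : letter Gt) : bool :=
  match x with Le m => Nat.eqb m k | _ => false end.

Definition is_interval (I : R -> Prop) : Prop :=
  forall x y z, I x -> I z -> (x <= y <= z)%R -> I y.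

Definition Galpha (I : R -> Prop) := {r : R | I r}.
Definition Alpha (I : R -> Prop) := letter (Galpha I).

(* p is given as a boolean strict relation "p x y" = "x < y in the order p".
   Admissible: strict linear order, G is an interval for p, and on G p is
   the usual order of reals or its reverse. *)
Definition admissible (I : R -> Prop) (p : Alpha I -> Alpha I -> bool) : Prop :=
  (forall x, p x x = false) /\
  (forall x y z, p x y = true -> p y z = true -> p x z = true) /\
  (forall x y, x <> y -> p x y = true \/ p y x = true) /\
  (forall (g h : Galpha I) (z : Alpha I),
      p (Gl g) z = true -> p z (Gl h) = true -> exists k, z = Gl k) /\
  ((forall g h : Galpha I, p (Gl g) (Gl h) = true <-> (proj1_sig g < proj1_sig h)%R) \/
   (forall g h : Galpha I, p (Gl g) (Gl h) = true <-> (proj1_sig h < proj1_sig g)%R)).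

Section RSK.
Context {Gt : Type} (p : letter Gt -> letter Gt -> bool).

(* y is a bumping candidate for inserted letter x:
   x in L_e: y > x strictly; otherwise y >= x, i.e. not (y < x). *)
Definition bumps (x y : letter Gt) : bool :=
  if is_Le x then p x y else negb (p y x).

Fixpoint row_ins (x : letter Gt) (r : list (letter Gt))
  : list (letter Gt) * option (letter Gt) :=
  match r with
  | [] => ([x], None)
  | y :: r' =>
      if bumps x y then (x :: r', Some y)
      else let (r2, o) := row_ins x r' in (y :: r2, o)
  end.

Definition tableau := list (list (letter Gt)).

Fixpoint ins (x : letter Gt) (T : tableau) : tableau :=
  match T with
  | [] => [[x]]
  | r :: T' =>
      let (r', o) := row_ins x r in
      match o with
      | None => r' :: T'
      | Some y => r' :: ins y T'
      end
  end.

Definition RSK (w : list (letter Gt)) : tableau :=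
  fold_left (fun T x => ins x T) w [].

Definition first_bump (x : letter Gt) (T : tableau) : option (letter Gt) :=
  match T with
  | [] => None
  | r :: _ => snd (row_ins x r)
  end.

Section AB.
Variables (a b : nat).  (* the letters Le a, Le b *)

Definition isab (x : letter Gt) : bool := isLeN a x || isLeN b x.

Definition restrict_ab (w : list (letter Gt)) : list (letter Gt) := filter isab w.

Fixpoint bump_trace (T : tableau) (w : list (letter Gt)) : list (letter Gt) :=
  match w with
  | [] => []
  | x :: w' =>
      match first_bump x T with
      | Some y => if isab y then [y] else []
      | None => []
      end ++ bump_trace (ins x T) w'
  end.

(* the possible transformation d_w(w_{a,b}) *)
Definition d_trans (w : list (letter Gt)) : list (letter Gt) :=
  bump_trace [] w ++ filter isab (hd [] (RSK w)).

Definition score (u : list (letter Gt)) : Z :=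
  (Z.of_nat (length (filter (isLeN b) u)) - Z.of_nat (length (filter (isLeN a) u)))%Z.

(* rho(u): max over all suffixes u_k...u_N (k = 0..N, incl. empty) of score *)
Definition rho (u : list (letter Gt)) : Z :=
  fold_right Z.max (score []) (map (fun k => score (skipn k u)) (seq 0 (S (length u)))).
End AB.
End RSK.

(* Main.v *)
Require Import Defs.
From Stdlib Require Import Reals ZArith Arith List Bool Lia Permutation Classical.
Import ListNotations.

Section Pf.
Context {Gt : Type} (p : letter Gt -> letter Gt -> bool).
Hypothesis irr : forall x, p x x = false.
Hypothesis ptrans : forall x y z, p x y = true -> p y z = true -> p x z = true.
Hypothesis tot : forall x y, x <> y -> p x y = true \/ p y x = true.
Variables a b : nat.
Hypothesis Hab : p (Le a) (Le b) = true.
Hypothesis Hadj : forall z, ~ (p (Le a) z = true /\ p z (Le b) = true).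

Definition lep x y := p y x = false.

Lemma asym x y : p x y = true -> p y x = false.
Proof. intros H. destruct (p y x) eqn:E; [|reflexivity].
  pose proof (ptrans _ _ _ H E). rewrite irr in H0. discriminate. Qed.

Lemma lep_trans x y z : lep x y -> lep y z -> lep x z.
Proof. unfold lep. intros H1 H2. destruct (p z x) eqn:E; [|reflexivity]. exfalso.
  destruct (classic (x = y)) as [->|Hn]. congruence.
  destruct (tot _ _ Hn) as [H|H]; [|congruence].
  pose proof (ptrans _ _ _ E H). congruence. Qed.

Lemma bumps_le x y : bumps p x y = true -> lep x y.
Proof. unfold bumps, lep. destruct (is_Le x); intros H. apply asym; auto.
  destruct (p y x); simpl in *; congruence. Qed.

Lemma nbumps_le x y : bumps p x y = false -> lep y x.
Proof. unfold bumps, lep. destruct (is_Le x); intros H. auto.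
  destruct (p y x) eqn:E; simpl in *; try congruence. apply asym; auto. Qed.

Fixpoint sortedp (r : list (letter Gt)) : Prop :=
  match r with [] => True | y :: r' => (forall z, In z r' -> lep y z) /\ sortedp r' end.

Definition optlist (o : option (letter Gt)) := match o with Some y => [y] | None => [] end.

Lemma row_perm x r : Permutation (x :: r) (fst (row_ins p x r) ++ optlist (snd (row_ins p x r))).
Proof. induction r as [|z r IH]; simpl. constructor; constructor.
  destruct (bumps p x z); simpl. constructor. apply Permutation_cons_append.
  destruct (row_ins p x r) as [r2 o]; simpl in *.
  eapply perm_trans; [apply perm_swap|]. constructor. exact IH. Qed.

Lemma row_mem x r r' y : row_ins p x r = (r', Some y) -> In y r /\ bumps p x y = true.
Proof. revert r'. induction r as [|z r IH]; simpl; intros r' H. discriminate.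
  destruct (bumps p x z) eqn:Eb. inversion H; subst; auto.
  destruct (row_ins p x r) as [r2 o]; simpl in *. inversion H; subst.
  destruct (IH r2 eq_refl); auto. Qed.

Lemma row_sorted x r : sortedp r -> sortedp (fst (row_ins p x r)).
Proof. induction r as [|z r IH]; simpl. intros _. split; [intros w []|exact I].
  intros [Hz Hr]. destruct (bumps p x z) eqn:Eb; simpl.
  - split; [|exact Hr]. intros w Hw. apply lep_trans with z; [apply bumps_le; auto | apply Hz; auto].
  - pose proof (row_perm x r) as HP.
    destruct (row_ins p x r) as [r2 o]; simpl in *. split; [|auto].
    intros w Hw. assert (Hw' : In w (x :: r)).
    { apply (Permutation_in _ (Permutation_sym HP)). apply in_or_app; auto. }
    destruct Hw' as [<-|Hw']. apply nbumps_le; auto. auto. Qed.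

Definition cnt n (r : list (letter Gt)) := length (filter (@isLeN Gt n) r).

Lemma cnt_perm n l l' : Permutation l l' -> cnt n l = cnt n l'.
Proof. unfold cnt. induction 1; simpl; auto.
  destruct (isLeN n x); simpl; auto.
  destruct (isLeN n x), (isLeN n y); simpl; auto. congruence. Qed.

Lemma cnt_app n l l' : cnt n (l ++ l') = cnt n l + cnt n l'.
Proof. unfold cnt. rewrite filter_app, length_app. auto. Qed.

Lemma isLeN_eq n (y : letter Gt) : isLeN n y = true -> y = Le n.
Proof. destruct y; simpl; try discriminate. intros H. apply Nat.eqb_eq in H. subst; auto. Qed.

Lemma cnt_pos_in n r : cnt n r > 0 -> In (Le n) r.
Proof. unfold cnt. induction r as [|z r IH]; simpl. lia.
  destruct (isLeN n z) eqn:E; simpl. intros _. left. apply (isLeN_eq n z); auto.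
  intros H; right; auto. Qed.

Lemma cnt_in n r : In (Le n) r -> cnt n r > 0.
Proof. unfold cnt. induction r as [|z r IH]; simpl. tauto.
  intros [->|H]. simpl. rewrite Nat.eqb_refl. simpl. lia.
  destruct (isLeN n z); simpl; auto. lia. Qed.

Lemma ab_ne : a <> b.
Proof. intros ->. rewrite irr in Hab. discriminate. Qed.

Lemma noA r : (forall w, In w r -> lep (Le b) w) -> cnt a r = 0.
Proof. intros H. destruct (cnt a r) eqn:E; auto. exfalso.
  assert (Hi : In (Le a) r) by (apply cnt_pos_in; lia).
  apply H in Hi. unfold lep in Hi. congruence. Qed.

Lemma filter_sorted r : sortedp r ->
  filter (isab a b) r = repeat (Le a) (cnt a r) ++ repeat (Le b) (cnt b r).
Proof. induction r as [|z r IH]; simpl. auto.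
  intros [Hz Hr]. unfold cnt in *. simpl.
  destruct z as [n|n|g]; simpl; auto.
  change (isab a b (Le n)) with (Nat.eqb n a || Nat.eqb n b).
  destruct (Nat.eqb_spec n a); destruct (Nat.eqb_spec n b); try subst n; simpl.
  - exfalso; apply ab_ne; auto.
  - rewrite IH; auto.
  - assert (Hc : cnt a r = 0) by (apply noA; auto). unfold cnt in Hc.
    rewrite IH by auto. rewrite Hc. reflexivity.
  - apply IH; auto. Qed.

Lemma bumpA r : sortedp r -> In (Le b) r -> snd (row_ins p (Le a) r) = Some (Le b).
Proof. induction r as [|z r IH]; simpl. tauto.
  intros [Hz Hr] Hin. unfold bumps at 1. simpl.
  destruct (p (Le a) z) eqn:E.
  - simpl. f_equal. destruct Hin as [->|Hin]; auto.
    apply Hz in Hin. unfold lep in Hin.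
    destruct (classic (z = Le b)) as [|Hn]; auto. exfalso.
    destruct (tot _ _ Hn) as [H|H]; [|congruence]. apply (Hadj z); auto.
  - destruct Hin as [Hzb|Hin]. subst z. rewrite Hab in E. discriminate.
    destruct (row_ins p (Le a) r) as [r2 o] eqn:E2. simpl in *. apply IH; auto. Qed.

Lemma isab_false (y : letter Gt) : isab a b y = false -> isLeN a y = false /\ isLeN b y = false.
Proof. unfold isab. intros H. apply orb_false_elim in H. exact H. Qed.

Lemma classify (y : letter Gt) : {y = Le a} + {y = Le b} + {isab a b y = false}.
Proof. destruct y as [n|n|g].
  - destruct (Nat.eq_dec n a). subst; left; left; auto.
    destruct (Nat.eq_dec n b). subst; left; right; auto.
    right. unfold isab; simpl. apply Nat.eqb_neq in n0. apply Nat.eqb_neq in n1. rewrite n0, n1; auto.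
  - right; reflexivity.
  - right; reflexivity. Qed.

Lemma bumpA0 r y : cnt b r = 0 -> snd (row_ins p (Le a) r) = Some y -> isab a b y = false.
Proof. intros Hc H. destruct (row_ins p (Le a) r) as [r' o] eqn:E. simpl in H. subst o.
  destruct (row_mem _ _ _ _ E) as [Hi Hb]. unfold bumps in Hb; simpl in Hb.
  destruct (classify y) as [[->| ->]|]; auto.
  - rewrite irr in Hb; discriminate.
  - apply cnt_in in Hi. lia. Qed.

Lemma bumpB r y : snd (row_ins p (Le b) r) = Some y -> isab a b y = false.
Proof. intros H. destruct (row_ins p (Le b) r) as [r' o] eqn:E. simpl in H. subst o.
  destruct (row_mem _ _ _ _ E) as [Hi Hb]. unfold bumps in Hb; simpl in Hb.
  destruct (classify y) as [[->| ->]|]; auto.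
  - rewrite (asym _ _ Hab) in Hb; discriminate.
  - rewrite irr in Hb; discriminate. Qed.

Lemma bumps_contra x : isab a b x = false -> bumps p x (Le a) = false -> bumps p x (Le b) = true -> False.
Proof. intros Hx H1 H2. apply (Hadj x).
  assert (Hxa : x <> Le a) by (intros ->; unfold isab in Hx; simpl in Hx; rewrite Nat.eqb_refl in Hx; discriminate).
  assert (Hxb : x <> Le b) by (intros ->; unfold isab in Hx; simpl in Hx; rewrite Nat.eqb_refl, orb_true_r in Hx; discriminate).
  unfold bumps in *. destruct (is_Le x).
  - split; auto. destruct (tot _ _ Hxa) as [H|H]; congruence.
  - destruct (p (Le a) x) eqn:E1; simpl in H1; try discriminate.
    destruct (p (Le b) x) eqn:E2; simpl in H2; try discriminate. split; auto.
    destruct (tot _ _ Hxb) as [H|H]; congruence. Qed.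

Lemma bumpC x r : isab a b x = false -> sortedp r -> snd (row_ins p x r) = Some (Le b) -> cnt a r = 0.
Proof. intros Hx. induction r as [|z r IH]; simpl. discriminate.
  intros [Hz Hr] H. unfold cnt; simpl. destruct (bumps p x z) eqn:Eb.
  - simpl in H. inversion H; subst z. simpl.
    replace (b =? a) with false by (symmetry; apply Nat.eqb_neq; intro; apply ab_ne; auto).
    apply noA; auto.
  - destruct (row_ins p x r) as [r2 o] eqn:E. simpl in H. subst o.
    specialize (IH Hr eq_refl). unfold cnt in IH.
    destruct (row_mem _ _ _ _ E) as [Hi Hb].
    destruct (isLeN a z) eqn:Ez; auto.
    apply isLeN_eq in Ez. subst z. exfalso. eapply bumps_contra; eauto. Qed.

Lemma score_app (u v : list (letter Gt)) : score a b (u ++ v) = (score a b u + score a b v)%Z.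
Proof. unfold score. rewrite !filter_app, !length_app. lia. Qed.

Lemma rho_nil : rho a b ([] : list (letter Gt)) = 0%Z.
Proof. reflexivity. Qed.

Lemma rho_cons (x : letter Gt) u : rho a b (x :: u) = Z.max (score a b (x :: u)) (rho a b u).
Proof. unfold rho. change (length (x :: u)) with (S (length u)).
  change (seq 0 (S (S (length u)))) with (0 :: seq 1 (S (length u))).
  rewrite <- (seq_shift (S (length u)) 0). cbn -[seq score map]. cbn [map]. rewrite map_map. reflexivity. Qed.

Lemma score_le_rho (u : list (letter Gt)) : (score a b u <= rho a b u)%Z.
Proof. destruct u. rewrite rho_nil. unfold score; simpl; lia. rewrite rho_cons. lia. Qed.

Lemma rho_nonneg (u : list (letter Gt)) : (0 <= rho a b u)%Z.
Proof. induction u. rewrite rho_nil; lia. rewrite rho_cons. lia. Qed.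

Lemma rho_app (u v : list (letter Gt)) : rho a b (u ++ v) = Z.max (rho a b v) (score a b v + rho a b u)%Z.
Proof. induction u as [|x u IH]; simpl.
  rewrite rho_nil. pose proof (score_le_rho v). lia.
  rewrite !rho_cons, IH. change (x :: u ++ v) with ([x] ++ (u ++ v)).
  change (x :: u) with ([x] ++ u). rewrite !score_app. lia. Qed.

Lemma ab_neqb : (a =? b) = false.
Proof. apply Nat.eqb_neq; apply ab_ne. Qed.
Lemma ba_neqb : (b =? a) = false.
Proof. apply Nat.eqb_neq; intro; apply ab_ne; auto. Qed.
Lemma sc_a : score a b [Le a : letter Gt] = (-1)%Z.
Proof. unfold score; simpl. rewrite Nat.eqb_refl, ab_neqb. reflexivity. Qed.
Lemma sc_b : score a b [Le b : letter Gt] = 1%Z.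
Proof. unfold score; simpl. rewrite Nat.eqb_refl, ba_neqb. reflexivity. Qed.
Lemma score_repA i : score a b (repeat (Le a) i : list (letter Gt)) = (- Z.of_nat i)%Z.
Proof. induction i. reflexivity.
  change (repeat (Le a) (S i)) with ([Le a] ++ repeat (Le a) i : list (letter Gt)).
  rewrite score_app, IHi, sc_a. lia. Qed.
Lemma score_repB i : score a b (repeat (Le b) i : list (letter Gt)) = Z.of_nat i.
Proof. induction i. reflexivity.
  change (repeat (Le b) (S i)) with ([Le b] ++ repeat (Le b) i : list (letter Gt)).
  rewrite score_app, IHi, sc_b. lia. Qed.

Lemma rho_repA i : rho a b (repeat (Le a) i : list (letter Gt)) = 0%Z.
Proof. induction i; simpl. reflexivity. rewrite rho_cons, IHi.
  change (Le a :: repeat (Le a) i) with (repeat (Le a) (S i) : list (letter Gt)).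
  rewrite score_repA. lia. Qed.

Lemma rho_repB i : rho a b (repeat (Le b) i : list (letter Gt)) = Z.of_nat i.
Proof. induction i; simpl. reflexivity. rewrite rho_cons, IHi.
  change (Le b :: repeat (Le b) i) with (repeat (Le b) (S i) : list (letter Gt)).
  rewrite score_repB. lia. Qed.

Lemma rhoF (U : list (letter Gt)) i j : rho a b (U ++ (repeat (Le a) i ++ repeat (Le b) j)) =
  Z.max (Z.of_nat j) (Z.of_nat j - Z.of_nat i + rho a b U)%Z.
Proof. rewrite rho_app, rho_app, score_app, score_repA, score_repB, rho_repA, rho_repB. lia. Qed.

Lemma rh_a : rho a b [Le a : letter Gt] = 0%Z.
Proof. apply (rho_repA 1). Qed.
Lemma rh_b : rho a b [Le b : letter Gt] = 1%Z.
Proof. apply (rho_repB 1). Qed.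

Lemma cnt_a_a : cnt a [Le a : letter Gt] = 1.
Proof. unfold cnt; simpl; rewrite Nat.eqb_refl; auto. Qed.
Lemma cnt_b_b : cnt b [Le b : letter Gt] = 1.
Proof. unfold cnt; simpl; rewrite Nat.eqb_refl; auto. Qed.
Lemma cnt_b_a : cnt b [Le a : letter Gt] = 0.
Proof. unfold cnt; simpl. replace (a =? b) with false by (symmetry; apply Nat.eqb_neq; apply ab_ne). auto. Qed.
Lemma cnt_a_b : cnt a [Le b : letter Gt] = 0.
Proof. unfold cnt; simpl. replace (b =? a) with false by (symmetry; apply Nat.eqb_neq; intro; apply ab_ne; auto). auto. Qed.
Lemma cnt_na n (y : letter Gt) : isab a b y = false -> (n = a \/ n = b) -> cnt n [y] = 0.
Proof. intros H [->| ->]; apply isab_false in H; unfold cnt; simpl; destruct H as [H1 H2];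
  [rewrite H1|rewrite H2]; auto. Qed.
Lemma fab_a : filter (isab a b) [Le a : letter Gt] = [Le a].
Proof. unfold isab; simpl. rewrite Nat.eqb_refl. auto. Qed.
Lemma fab_b : filter (isab a b) [Le b : letter Gt] = [Le b].
Proof. unfold isab; simpl. rewrite Nat.eqb_refl, orb_true_r. auto. Qed.
Lemma fab_n (y : letter Gt) : isab a b y = false -> filter (isab a b) [y] = [].
Proof. intros H; simpl; rewrite H; auto. Qed.

Lemma isab_a : isab a b (Le a : letter Gt) = true.
Proof. unfold isab; simpl; rewrite Nat.eqb_refl; auto. Qed.
Lemma isab_b : isab a b (Le b : letter Gt) = true.
Proof. unfold isab; simpl; rewrite Nat.eqb_refl, orb_true_r; auto. Qed.
Lemma sc_nil : score a b ([] : list (letter Gt)) = 0%Z.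
Proof. reflexivity. Qed.

Definition bpof (o : option (letter Gt)) : list (letter Gt) :=
  match o with Some y => if isab a b y then [y] else [] | None => [] end.

Lemma cnt_nil n : cnt n ([] : list (letter Gt)) = 0.
Proof. reflexivity. Qed.

Lemma step x r Tr W : sortedp r -> (rho a b (Tr ++ filter (isab a b) r) <= rho a b W)%Z ->
  (rho a b ((Tr ++ bpof (snd (row_ins p x r))) ++ filter (isab a b) (fst (row_ins p x r)))
   <= rho a b (W ++ filter (isab a b) [x]))%Z.
Proof.
  intros Hs H.
  pose proof (row_sorted x r Hs) as Hs'.
  pose proof (row_perm x r) as HP.
  pose proof (cnt_perm a _ _ HP) as Ca. pose proof (cnt_perm b _ _ HP) as Cb.
  change (x :: r) with ([x] ++ r) in Ca, Cb. rewrite cnt_app in Ca, Cb.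
  rewrite (filter_sorted r Hs), rhoF in H.
  pose proof (rho_nonneg Tr). pose proof (rho_nonneg W).
  destruct (classify x) as [[->| ->]|Hx].
  - rewrite fab_a, (rho_app W), rh_a, sc_a. rewrite cnt_a_a in Ca. rewrite cnt_b_a in Cb.
    destruct (Nat.eq_dec (cnt b r) 0) as [Hj|Hj].
    + pose proof (bumpA0 r) as HB.
      destruct (row_ins p (Le a) r) as [r' o]; cbn [fst snd bpof optlist] in *.
      rewrite (filter_sorted r' Hs'), rhoF. rewrite cnt_app in Ca, Cb.
      destruct o as [y|]; cbn [fst snd bpof optlist] in *.
      * specialize (HB y Hj eq_refl). rewrite HB, app_nil_r.
        rewrite (cnt_na a y HB (or_introl eq_refl)) in Ca.
        rewrite (cnt_na b y HB (or_intror eq_refl)) in Cb. rewrite ?cnt_nil in Ca, Cb; lia.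
      * rewrite app_nil_r. rewrite ?cnt_nil in Ca, Cb; lia.
    + pose proof (bumpA r Hs (cnt_pos_in b r ltac:(lia))) as HB.
      destruct (row_ins p (Le a) r) as [r' o]; cbn [fst snd bpof optlist] in *. subst o. cbn [fst snd bpof optlist] in *.
      rewrite (filter_sorted r' Hs'), rhoF. rewrite cnt_app in Ca, Cb.
      rewrite isab_b, (rho_app Tr), rh_b, sc_b. rewrite cnt_a_b in Ca. rewrite cnt_b_b in Cb. rewrite ?cnt_nil in Ca, Cb; lia.
  - rewrite fab_b, (rho_app W), rh_b, sc_b. rewrite cnt_a_b in Ca. rewrite cnt_b_b in Cb.
    pose proof (bumpB r) as HB.
    destruct (row_ins p (Le b) r) as [r' o]; cbn [fst snd bpof optlist] in *.
    rewrite (filter_sorted r' Hs'), rhoF. rewrite cnt_app in Ca, Cb.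
    destruct o as [y|]; cbn [fst snd bpof optlist] in *.
    * specialize (HB y eq_refl). rewrite HB, app_nil_r.
      rewrite (cnt_na a y HB (or_introl eq_refl)) in Ca.
      rewrite (cnt_na b y HB (or_intror eq_refl)) in Cb. rewrite ?cnt_nil in Ca, Cb; lia.
    * rewrite app_nil_r. rewrite ?cnt_nil in Ca, Cb; lia.
  - rewrite (fab_n x Hx), app_nil_r.
    rewrite (cnt_na a x Hx (or_introl eq_refl)) in Ca.
    rewrite (cnt_na b x Hx (or_intror eq_refl)) in Cb.
    pose proof (bumpC x r Hx Hs) as HC.
    destruct (row_ins p x r) as [r' o]; cbn [fst snd bpof optlist] in *.
    rewrite (filter_sorted r' Hs'), rhoF. rewrite cnt_app in Ca, Cb.
    destruct o as [y|]; cbn [fst snd bpof optlist] in *.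
    + destruct (classify y) as [[->| ->]|Hy].
      * rewrite isab_a, (rho_app Tr), rh_a, sc_a. rewrite cnt_a_a in Ca. rewrite cnt_b_a in Cb. rewrite ?cnt_nil in Ca, Cb; lia.
      * specialize (HC eq_refl). rewrite isab_b, (rho_app Tr), rh_b, sc_b.
        rewrite cnt_a_b in Ca. rewrite cnt_b_b in Cb. rewrite ?cnt_nil in Ca, Cb; lia.
      * rewrite Hy, app_nil_r.
        rewrite (cnt_na a y Hy (or_introl eq_refl)) in Ca.
        rewrite (cnt_na b y Hy (or_intror eq_refl)) in Cb. rewrite ?cnt_nil in Ca, Cb; lia.
    + rewrite app_nil_r. rewrite ?cnt_nil in Ca, Cb; lia.
Qed.

Lemma hd_ins x (T : tableau) : hd [] (ins p x T) = fst (row_ins p x (hd [] T)).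
Proof. destruct T as [|r T]; simpl. reflexivity.
  destruct (row_ins p x r) as [r' [y|]]; reflexivity. Qed.

Lemma fb_ins x (T : tableau) : first_bump p x T = snd (row_ins p x (hd [] T)).
Proof. destruct T as [|r T]; reflexivity. Qed.

Lemma main v : forall (T : tableau) Tr W, sortedp (hd [] T) ->
  (rho a b (Tr ++ filter (isab a b) (hd [] T)) <= rho a b W)%Z ->
  (rho a b (Tr ++ bump_trace p a b T v ++ filter (isab a b) (hd [] (fold_left (fun T x => ins p x T) v T)))
   <= rho a b (W ++ filter (isab a b) v))%Z.
Proof. induction v as [|x v IH]; intros T Tr W Hs H.
  - cbn [bump_trace fold_left filter]. rewrite !app_nil_r. exact H.
  - cbn [bump_trace fold_left].
    change (x :: v) with ([x] ++ v). rewrite filter_app.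
    rewrite <- !app_assoc. rewrite (app_assoc Tr), (app_assoc W).
    apply IH.
    + rewrite hd_ins. apply row_sorted. exact Hs.
    + rewrite hd_ins, fb_ins. apply step; auto.
Qed.
End Pf.

Theorem lemma5 (I : R -> Prop) (HI : is_interval I)
  (p : Alpha I -> Alpha I -> bool) (Hp : admissible p)
  (a b : nat)
  (Hab : p (Le a) (Le b) = true)
  (Hadj : forall z : Alpha I, ~ (p (Le a) z = true /\ p z (Le b) = true))
  (w : list (Alpha I)) :
  (rho a b (d_trans p a b w) <= rho a b (restrict_ab a b w))%Z.
Proof.
  destruct Hp as [Hirr [Htr [Htot _]]].
  unfold d_trans, restrict_ab, RSK.
  pose proof (main p Hirr Htr Htot a b Hab Hadj w [] [] [] Logic.I ltac:(reflexivity)) as M.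
  simpl in M. exact M.
Qed.
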